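(* Consider the system \[ x_{k+1} = x_k - \rho y_k + \hat g(y_k,w_k),\qquad y_{k+1} = (1-\beta)y_k + \hat h(y_{k-1},w_{k-1})\bigl(J(x_k)-J(x_{k-1})\bigr) \] with the setup described in the context. Then for any function $\bar f:\mathbb{R}^3\to\mathbb{R}$ and any $k\ge1$, \[ \mathbb{E}\Bigl[\frac{\mu h_{k-1}\bar f(x_{k-1},y_{k-1},y_k)}{|y_{k-1}|+\varepsilon}\Delta_{k-1}\Bigr] =\mu\gamma\,\mathbb{E}\bigl[\bar f(x_{k-1},y_{k-1},y_k)\,(\tilde x_{k-1}-\rho y_{k-1})\bigr]. \]
   Context: Setup. Parameters: $\rho>0$, $\beta\in(0,2)$, $\varepsilon>0$, $\omega>0$. The random variables $w_i$, $i\in\mathbb{N}\cup\{0\}$, are i.i.d., each taking the value $-\omega$ or $\omega$ with probability $1/2$. The functions $h,g:\mathbb{R}\to\mathbb{R}$ are odd, satisfy $\mathrm{sign}(g(w))=\mathrm{sign}(h(w))$ for all $w$, and $g(w)=h(w)=0$ if and only if $w=0$. Define $\hat h(y,w):=\frac{h(w)}{|y|+\varepsilon}$ and $\hat g(y,w):=(|y|+\varepsilon)g(w)$. The objective is $J(x)=J^*+\frac{\mu}{2}(x-x^* )^2$ with $\mu>0$, $x^*,J^*\in\mathbb{R}$. The initial data $x_0,y_0$ and the initialization $y_1$ (the $y$-update being applied for $k\ge1$) are deterministic. Notation: $h_k:=h(w_k)$, $g_k:=g(w_k)$, $\tilde x_k:=x_k-x^*$, $\gamma:=\mathbb{E}[h_kg_k]$,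 and \[ \Delta_{k-1}:=(\tilde x_{k-1}-\rho y_{k-1})(|y_{k-1}|+\varepsilon)g_{k-1}-\rho\tilde x_{k-1}y_{k-1}+\tfrac{\rho^2}{2}y_{k-1}^2+\tfrac{g_{k-1}^2}{2}(|y_{k-1}|+\varepsilon)^2, \] so that $J(x_k)=J(x_{k-1})+\mu\Delta_{k-1}$. *)

(* Defs.v *)
From HB Require Import structures.
From mathcomp Require Import all_boot all_order all_algebra.
Set Implicit Arguments. Unset Strict Implicit. Unset Printing Implicit Defensive.
Import Order.TTheory GRing.Theory Num.Theory.
Local Open Scope ring_scope.

Section Defs.
Variable R : realFieldType.

(* Sample sequence obtained from the first n signs s; coordinates >= n are
   irrelevant for random variables depending on w_0..w_{n-1}. *)
Definition seq_of_signs (omega : R) (n : nat) (s : {ffun 'I_n -> bool}) : nat -> R :=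
  fun i => match (insub i : option 'I_n) with
           | Some j => if s j then omega else - omega
           | None => omega
           end.

(* Expectation of a random variable F(w) depending only on w_0,...,w_{n-1},
   where the w_i are i.i.d. uniform on {-omega, omega}. *)
Definition Ew (omega : R) (n : nat) (F : (nat -> R) -> R) : R :=
  (2 ^+ n)^-1 * \sum_(s : {ffun 'I_n -> bool}) F (seq_of_signs omega s).

Definition Jobj (mu xstar Jstar x : R) : R := Jstar + mu / 2 * (x - xstar) ^+ 2.

Definition ghat (g : R -> R) (eps y w : R) : R := (`|y| + eps) * g w.
Definition hhat (h : R -> R) (eps y w : R) : R := h w / (`|y| + eps).

(* state n = ((x_n, y_n), (x_{n+1}, y_{n+1})) along the sample path w *)
Fixpoint state (rho beta eps mu xstar Jstar x0 y0 y1 : R) (h g : R -> R)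
    (w : nat -> R) (n : nat) : (R * R) * (R * R) :=
  match n with
  | 0 => ((x0, y0), (x0 - rho * y0 + ghat g eps y0 (w 0%N), y1))
  | n'.+1 =>
      let: ((xa, ya), (xb, yb)) :=
        state rho beta eps mu xstar Jstar x0 y0 y1 h g w n' in
      ((xb, yb),
       (xb - rho * yb + ghat g eps yb (w n),
        (1 - beta) * yb + hhat h eps ya (w n')
                         * (Jobj mu xstar Jstar xb - Jobj mu xstar Jstar xa)))
  end.

Definition xs rho beta eps mu xstar Jstar x0 y0 y1 h g w n : R :=
  (state rho beta eps mu xstar Jstar x0 y0 y1 h g w n).1.1.
Definition ys rho beta eps mu xstar Jstar x0 y0 y1 h g w n : R :=
  (state rho beta eps mu xstar Jstar x0 y0 y1 h g w n).1.2.

(* Delta_{k-1} written in terms of x_{k-1}, y_{k-1}, g_{k-1} *)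
Definition Delta (rho eps xstar x y gk : R) : R :=
  (x - xstar - rho * y) * (`|y| + eps) * gk - rho * (x - xstar) * y
  + rho ^+ 2 / 2 * y ^+ 2 + gk ^+ 2 / 2 * (`|y| + eps) ^+ 2.

Definition gammaE (omega : R) (h g : R -> R) : R :=
  Ew omega 1 (fun w => h (w 0%N) * g (w 0%N)).

End Defs.

(* Main.v *)
Require Import Defs.
From HB Require Import structures.
From mathcomp Require Import all_boot all_order all_algebra.
From mathcomp Require Import ring lra.
Import Order.TTheory GRing.Theory Num.Theory.
Set Implicit Arguments. Unset Strict Implicit.
Local Open Scope ring_scope.

Section Aux.
Variable R : realFieldType.

Definition flipl n (s : {ffun 'I_n.+1 -> bool}) : {ffun 'I_n.+1 -> bool} :=
  [ffun i => if i == ord_max then ~~ s i else s i].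

Lemma flipl_inv n : involutive (@flipl n).
Proof.
move=> s; apply/ffunP => i; rewrite !ffunE.
by case: (i == ord_max); rewrite ?negbK.
Qed.

Lemma sos_vals (omega : R) n (s : {ffun 'I_n -> bool}) i :
  seq_of_signs omega s i = omega \/ seq_of_signs omega s i = - omega.
Proof.
rewrite /seq_of_signs; case: insubP => [j _ _|_]; last by left.
by case: (s j); [left|right].
Qed.

Lemma sos_flip (omega : R) n (s : {ffun 'I_n.+1 -> bool}) i :
  seq_of_signs omega (flipl s) i =
  if i == n then - seq_of_signs omega s i else seq_of_signs omega s i.
Proof.
rewrite /seq_of_signs; case: insubP => [j _ <-|Hi].
  rewrite ffunE.
  have -> : (j == ord_max) = (nat_of_ord j == n) by rewrite -val_eqE.
  by case: (nat_of_ord j == n); case: (s j); rewrite ?opprK.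
have -> : (i == n) = false.
  by apply/negbTE; apply/eqP => E; move: Hi; rewrite E ltnSn.
done.
Qed.

Lemma state_ext rho beta eps mu xstar Jstar x0 y0 y1 (h g : R -> R) w w' n :
  (forall i, (i <= n)%N -> w i = w' i) ->
  state rho beta eps mu xstar Jstar x0 y0 y1 h g w n =
  state rho beta eps mu xstar Jstar x0 y0 y1 h g w' n.
Proof.
elim: n => [|n IH] H /=; first by rewrite H.
rewrite IH; last by move=> i Hi; apply: H; apply: leq_trans Hi _.
by rewrite H // H // leqnSn.
Qed.

Lemma state_succ rho beta eps mu xstar Jstar x0 y0 y1 (h g : R -> R) w n :
  (state rho beta eps mu xstar Jstar x0 y0 y1 h g w n.+1).1 =
  (state rho beta eps mu xstar Jstar x0 y0 y1 h g w n).2.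
Proof. by rewrite /=; case: (state _ _ _ _ _ _ _ _ _ _ _ _ _) => [[? ?] [? ?]]. Qed.

Lemma state_lt rho beta eps mu xstar Jstar x0 y0 y1 (h g : R -> R) w w' n :
  (forall i, (i < n)%N -> w i = w' i) ->
  (state rho beta eps mu xstar Jstar x0 y0 y1 h g w n).1 =
  (state rho beta eps mu xstar Jstar x0 y0 y1 h g w' n).1 /\
  (state rho beta eps mu xstar Jstar x0 y0 y1 h g w n).2.2 =
  (state rho beta eps mu xstar Jstar x0 y0 y1 h g w' n).2.2.
Proof.
case: n => [|m] H /=; first by [].
rewrite (@state_ext _ _ _ _ _ _ _ _ _ _ _ w w' m); last first.
  by move=> i Hi; apply: H.
rewrite (H m) //.
by case: (state _ _ _ _ _ _ _ _ _ _ _ _ _) => [[? ?] [? ?]].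
Qed.

Lemma sum_flip_zero n (D : {ffun 'I_n.+1 -> bool} -> R) :
  (forall s, D s + D (flipl s) = 0) -> \sum_s D s = 0.
Proof.
move=> key.
have : \sum_s D s + \sum_s D s = 0.
  rewrite {2}(reindex_inj (inv_inj (@flipl_inv n))) -big_split /=.
  by apply: big1 => s _; apply: key.
lra.
Qed.

End Aux.

Theorem lemma3 (R : realFieldType) (rho beta eps omega mu xstar Jstar x0 y0 y1 : R)
    (h g : R -> R) (fbar : R -> R -> R -> R) (k : nat) :
  0 < rho -> 0 < beta -> beta < 2 -> 0 < eps -> 0 < omega -> 0 < mu ->
  (forall w, h (- w) = - h w) -> (forall w, g (- w) = - g w) ->
  (forall w, Num.sg (g w) = Num.sg (h w)) ->
  (forall w, g w = 0 <-> w = 0) -> (forall w, h w = 0 <-> w = 0) ->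
  (1 <= k)%N ->
  let x := xs rho beta eps mu xstar Jstar x0 y0 y1 h g in
  let y := ys rho beta eps mu xstar Jstar x0 y0 y1 h g in
  Ew omega k (fun w =>
      mu * h (w k.-1) * fbar (x w k.-1) (y w k.-1) (y w k) / (`|y w k.-1| + eps)
      * Delta rho eps xstar (x w k.-1) (y w k.-1) (g (w k.-1)))
  = mu * gammaE omega h g
    * Ew omega k (fun w =>
        fbar (x w k.-1) (y w k.-1) (y w k) * (x w k.-1 - xstar - rho * y w k.-1)).
Proof.
move=> Hrho _ _ Heps _ _ hodd godd _ _ _.
case: k => [//|n] _ x y /=.
have hg : forall a, a = omega \/ a = - omega -> h a * g a = h omega * g omega.
  by move=> a [->|->]; rewrite ?hodd ?godd // mulrNN.
have gam : gammaE omega h g = h omega * g omega.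
  rewrite /gammaE /Ew.
  rewrite (eq_bigr (fun _ => h omega * g omega)); last first.
    by move=> s _; apply: hg; apply: sos_vals.
  rewrite sumr_const card_ffun card_bool card_ord expr1.
  by rewrite mulr2n; field.
rewrite gam /Ew mulrCA; congr (_ * _).
rewrite mulr_sumr; apply/eqP; rewrite -subr_eq0 -sumrB; apply/eqP.
apply: sum_flip_zero => s.
  set w := seq_of_signs omega s.
  set w' := seq_of_signs omega (flipl s).
  have Hw : forall i, (i < n)%N -> w i = w' i.
    move=> i Hi; rewrite /w' sos_flip.
    by have -> : (i == n) = false by apply/negbTE; rewrite neq_ltn Hi.
  have [E1 E2] := state_lt rho beta eps mu xstar Jstar x0 y0 y1 h g Hw.
  have Ex : x w' n = x w n by rewrite /x /xs E1.
  have Ey : y w' n = y w n by rewrite /y /ys E1.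
  have Ey' : y w' n.+1 = y w n.+1 by rewrite /y /ys !state_succ E2.
  have Ea : w' n = - w n by rewrite /w' sos_flip eqxx.
  rewrite Ex Ey Ey' Ea hodd godd.
  rewrite -(hg (w n)); last by apply: sos_vals.
  have Hpos : `|y w n| + eps != 0.
    by apply: lt0r_neq0; apply: ltr_wpDl => //; apply: normr_ge0.
  rewrite /Delta; field.
  exact: Hpos.
Qed.
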